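(* Let $g,h,\lambda_{1,1}$ be fixed parameters, and consider the transformation of triples $(A,B,C)=(\lambda_{1,4}^{(i-1)},\lambda_{1,3}^{(i-1)},\lambda_{1,4}^{(i)})$ of nonzero quantities given by $$A\mapsto C,\qquad B\mapsto \frac{BC+h\lambda_{1,1}}{A},\qquad C\mapsto \frac{C^2}{A}+\frac{h\lambda_{1,1}C}{AB}+\frac{g\lambda_{1,1}}{B}.$$ Then the two functions $$G_\gamma=\frac{C}{A}+\frac{A}{C}+\frac{h\lambda_{1,1}}{BA}+\frac{g\lambda_{1,1}}{BC},\qquad \lambda_{4,4}=\frac{gA}{B}+\frac{hC}{B}$$ are invariant under this transformation.
   Context: This is the action of the Dehn twist around the geodesic $\gamma$ separating the two holes of a Riemann sphere with two holes, each with two bordered cusps ($PIII^{D_6}$ case): $\lambda_{\alpha,\beta}^{(i)}$ denotes the $\lambda$-length of the arc between bordered cusps $\alpha$ and $\beta$ winding $i$ times around the lower hole, $\lambda_{1,1}$ is the $\lambda$-length of the arc from cusp $1$ back to itself, and $g,h$ are $\lambda$-lengths of arcs on the other hole. The claim is an identity of rational functions. *)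

(* Defs.v *)
From mathcomp Require Import all_boot all_algebra.
Set Implicit Arguments. Unset Strict Implicit. Unset Printing Implicit Defensive.
Import GRing.Theory.
Local Open Scope ring_scope.

Definition dehn_step (F : fieldType) (g h l11 : F) (t : F * F * F) : F * F * F :=
  let: (A, B, C) := t in
  (C, (B * C + h * l11) / A,
   C ^+ 2 / A + h * l11 * C / (A * B) + g * l11 / B).

Definition G_gamma (F : fieldType) (g h l11 : F) (t : F * F * F) : F :=
  let: (A, B, C) := t in
  C / A + A / C + h * l11 / (B * A) + g * l11 / (B * C).

Definition lambda44 (F : fieldType) (g h l11 : F) (t : F * F * F) : F :=
  let: (A, B, C) := t in g * A / B + h * C / B.

(* Main.v *)
Require Import Defs.
From mathcomp Require Import all_boot all_algebra.
From mathcomp Require Import ring.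
Import GRing.Theory.
Local Open Scope ring_scope.

Theorem mainTheorem11 (F : fieldType) (g h l11 A B C : F) :
  A != 0 -> B != 0 -> C != 0 ->
  (dehn_step g h l11 (A, B, C)).1.2 != 0 ->
  (dehn_step g h l11 (A, B, C)).2 != 0 ->
  G_gamma g h l11 (dehn_step g h l11 (A, B, C)) = G_gamma g h l11 (A, B, C) /\
  lambda44 g h l11 (dehn_step g h l11 (A, B, C)) = lambda44 g h l11 (A, B, C).
Proof.
rewrite /=.
move=> hA hB hC hB' hC'.
have hB1 : B * C + h * l11 != 0.
  by apply: contraNneq hB' => ->; rewrite mul0r.
have hC1 : C ^+ 2 * B + h * l11 * C + g * l11 * A != 0.
  apply: contraNneq hC' => E.
  have -> : C ^+ 2 / A + h * l11 * C / (A * B) + g * l11 / B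
     = (C ^+ 2 * B + h * l11 * C + g * l11 * A) / (A * B) by field; rewrite hA hB.
  by rewrite E mul0r.
rewrite /G_gamma /lambda44 /=.
split; field; rewrite ?hA ?hB ?hC ?hB1 ?hC1 ?andbT //.
Qed.
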